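(* Let $\mathcal{G}_n$ be the random graph described in the context. For $\delta_n>0$, a configuration $\sigma:\mathcal{V}_n\to\{-1,1\}$, $k,l\in\{1,2\}$, $t\in\{-,+\}$ and $u\in\mathcal{V}_n^k$, let $$B_t^{k,l}(\sigma,u)=\Big\{\big|\hat Y_t^l(\sigma,u)-p_n(k,l)Y_t^l(\sigma)\big|\ge\sqrt{p_n(k,l)Y_t^l(\sigma)\delta_n}\Big\}.$$ Suppose $\gamma_n>0$, $\delta_n>0$ and $\xi_n\in(0,1)$ satisfy $$\lim_{n\to\infty}\delta_n=\infty,\qquad\lim_{n\to\infty}\frac{\delta_n}{\xi_n\lambda_n}=0,\qquad\lim_{n\to\infty}\frac{\delta_n}{\gamma_n}=\infty.$$ Fix $\zeta>0$ and $k,l\in\{1,2\}$, $s,t\in\{-,+\}$ with $(k,s)\neq(l,t)$. Then $$\max_{\sigma\in\Sigma_n(\zeta,\xi_n)}\frac{\gamma_n}{n}\sum_{u\in\mathcal{Y}_s^k(\sigma)}\mathbf{1}\{B_t^{k,l}(\sigma,u)\}\Rightarrow0\quad\text{as }n\to\infty.$$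
   Context: For each $n$, the node set $\mathcal{V}_n=\mathcal{V}_n^1\cup\mathcal{V}_n^2$ is a disjoint union of two communities of sizes $V_n^k=|\mathcal{V}_n^k|$ with $V_n^k/n\to v^k\in(0,\infty)$. The graph $\mathcal{G}_n$ is a stochastic block model: each unordered pair of distinct nodes is an edge independently with probability $p_n(k,l)$ for nodes in $\mathcal{V}_n^k$ and $\mathcal{V}_n^l$, where $p_n(k,k)=a_n=a\lambda_n/n$ and $p_n(k,l)=b_n=b\lambda_n/n$ for $k\ne l$, with constants $a>b>0$ and $\lambda_n\to\infty$. For a configuration $\sigma:\mathcal{V}_n\to\{-1,1\}$ and $s\in\{-,+\}$, $\mathcal{Y}_s^k(\sigma)=\{v\in\mathcal{V}_n^k:\sigma(v)=s1\}$, $Y_s^k(\sigma)=|\mathcal{Y}_s^k(\sigma)|$, and $\hat Y_s^k(\sigma,u)$ is the number of neighbors of $u$ in $\mathcal{Y}_s^k(\sigma)$. Magnetization: $z^k(\sigma)=\frac1{V_n^k}\sum_{u\in\mathcal{V}_n^k}\sigma(u)$, $z(\sigma)=(z^1(\sigma),z^2(\sigma))$. For a constant $\alpha\in\mathbb{R}$ and $\bar k=3-k$, let $\mathcal{L}^k(z)=(a-\alpha)v^kz^k+(b-\alpha)v^{\bar k}z^{\bar k}$ for $z\in\mathbb{R}^2$. For $\zeta>0$, $\xi\in(0,1)$: $\mathcal{A}(\zeta,\xi)=\{z\in[-1+\xi,1-\xi]^2:\min\{\mathcal{L}^1(z),-\mathcal{L}^2(z)\}\ge\zeta\}$ and $\Sigma_n(\zeta,\xi)=\{\sigma:\mathcal{V}_n\to\{-1,1\}\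 :\ z(\sigma)\in\mathcal{A}(\zeta,\xi)\}$. $\Rightarrow$ denotes weak convergence (here to the constant $0$). *)

(* Defs.v *)
From HB Require Import structures.
From mathcomp Require Import all_boot all_order all_algebra.
From mathcomp Require Import all_classical all_reals all_analysis.
Set Implicit Arguments. Unset Strict Implicit. Unset Printing Implicit Defensive.
Import Order.TTheory GRing.Theory Num.Theory.
Local Open Scope ring_scope.

(* Communities are indexed by 'I_2 : ord0 = community 1, ord_max = community 2.
   Spins are bool : true = +1, false = -1.  Nodes of G_n are 'I_(N n); the
   community of a node is given by cl : 'I_N -> 'I_2.  A (simple) graph is
   a set of 2-element subsets of nodes. *)

Definition other (k : 'I_2) : 'I_2 := if k == ord0 then ord_max else ord0.

Definition pn (R : realType) (a b : R) (lam : nat -> R) (n : nat) (k l : 'I_2) : R :=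
  (if k == l then a else b) * lam n / n%:R.

Definition Vk (N : nat) (cl : 'I_N -> 'I_2) (k : 'I_2) : nat := #|[set u | cl u == k]|.

Definition Yset (N : nat) (cl : 'I_N -> 'I_2) (sigma : {ffun 'I_N -> bool})
  (k : 'I_2) (s : bool) : {set 'I_N} := [set v | (cl v == k) && (sigma v == s)].

Definition adj (N : nat) (G : {set {set 'I_N}}) (u v : 'I_N) : bool := [set u; v] \in G.

Definition Yhat (N : nat) (cl : 'I_N -> 'I_2) (G : {set {set 'I_N}})
  (sigma : {ffun 'I_N -> bool}) (k : 'I_2) (s : bool) (u : 'I_N) : nat :=
  #|[set v in Yset cl sigma k s | adj G u v]|.

Definition spin (R : realType) (b : bool) : R := if b then 1 else -1.

Definition magn (R : realType) (N : nat) (cl : 'I_N -> 'I_2)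
  (sigma : {ffun 'I_N -> bool}) (k : 'I_2) : R :=
  ((Vk cl k)%:R)^-1 * \sum_(u | cl u == k) spin R (sigma u).

Definition Lk (R : realType) (a b alpha : R) (v : 'I_2 -> R) (z : 'I_2 -> R) (k : 'I_2) : R :=
  (a - alpha) * v k * z k + (b - alpha) * v (other k) * z (other k).

Definition inA (R : realType) (a b alpha : R) (v : 'I_2 -> R) (zeta xi : R)
  (z : 'I_2 -> R) : bool :=
  [forall k : 'I_2, (-1 + xi <= z k) && (z k <= 1 - xi)] &&
  (zeta <= Num.min (Lk a b alpha v z ord0) (- Lk a b alpha v z ord_max)).

Definition inSigma (R : realType) (a b alpha : R) (v : 'I_2 -> R) (zeta xi : R)
  (N : nat) (cl : 'I_N -> 'I_2) (sigma : {ffun 'I_N -> bool}) : bool :=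
  inA a b alpha v zeta xi (fun k => magn R cl sigma k).

(* the event B_t^{k,l}(sigma,u), for u in V^k, with p = p_n(k,l) *)
Definition Bevent (R : realType) (p delta : R) (N : nat) (cl : 'I_N -> 'I_2)
  (G : {set {set 'I_N}}) (sigma : {ffun 'I_N -> bool}) (l : 'I_2) (t : bool)
  (u : 'I_N) : bool :=
  Num.sqrt (p * (#|Yset cl sigma l t|)%:R * delta)
    <= `| (Yhat cl G sigma l t u)%:R - p * (#|Yset cl sigma l t|)%:R |.

(* max_{sigma in Sigma_n(zeta,xi_n)} gamma_n/n sum_{u in Y_s^k} 1{B_t^{k,l}(sigma,u)}
   (the max over an empty set is taken to be 0; all terms are >= 0) *)
Definition Xstat (R : realType) (a b alpha : R) (v : 'I_2 -> R) (zeta : R)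
  (lam gam del xi : nat -> R) (n N : nat) (cl : 'I_N -> 'I_2)
  (k l : 'I_2) (s t : bool) (G : {set {set 'I_N}}) : R :=
  \big[Num.max/0]_(sigma : {ffun 'I_N -> bool} | inSigma a b alpha v zeta (xi n) cl sigma)
    (gam n / n%:R *
     (#|[set u in Yset cl sigma k s | Bevent (pn a b lam n k l) (del n) cl G sigma l t u]|)%:R).

Definition pedge (R : realType) (a b : R) (lam : nat -> R) (n N : nat)
  (cl : 'I_N -> 'I_2) (e : {set 'I_N}) : R :=
  (if [forall u in e, forall w in e, cl u == cl w] then a else b) * lam n / n%:R.

(* law of the stochastic block model G_n: independent edges on unordered pairs *)
Definition SBMprob (R : realType) (a b : R) (lam : nat -> R) (n N : nat)
  (cl : 'I_N -> 'I_2) (G : {set {set 'I_N}}) : R :=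
  if [forall e in G, #|e| == 2] then
    \prod_(e : {set 'I_N} | #|e| == 2)
       (if e \in G then pedge a b lam n cl e else 1 - pedge a b lam n cl e)
  else 0.

Definition SBMexp (R : realType) (a b : R) (lam : nat -> R) (n N : nat)
  (cl : 'I_N -> 'I_2) (F : {set {set 'I_N}} -> R) : R :=
  \sum_(G : {set {set 'I_N}}) SBMprob a b lam n cl G * F G.

(* Main.v *)
Require Import Defs.
From HB Require Import structures.
From mathcomp Require Import all_boot all_order all_algebra.
From mathcomp Require Import all_classical all_reals all_analysis.
Import Order.TTheory GRing.Theory Num.Theory.
Import numFieldNormedType.Exports.
Local Open Scope classical_set_scope.
Local Open Scope ring_scope.

From mathcomp Require Import ring lra.

Local Close Scope classical_set_scope.
Set Implicit Arguments. Unset Strict Implicit. Unset Printing Implicit Defensive.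

Definition Wt (R : realType) (a b : R) (lam : nat -> R) (n N : nat)
  (cl : 'I_N -> 'I_2) (e : {set 'I_N}) (bo : bool) : R :=
  if #|e| == 2%N then (if bo then pedge a b lam n cl e else 1 - pedge a b lam n cl e)
  else (if bo then 0 else 1).

Lemma Wt_sum (R : realType) (a b : R) lam n N (cl : 'I_N -> 'I_2) e :
  Wt a b lam n cl e true + Wt a b lam n cl e false = 1.
Proof. rewrite /Wt; case: ifP => _; [by rewrite addrC subrK | by rewrite add0r]. Qed.

Lemma SBMprob_prod (R : realType) (a b : R) lam n N (cl : 'I_N -> 'I_2) G :
  SBMprob a b lam n cl G = \prod_e Wt a b lam n cl e (e \in G).
Proof.
rewrite /SBMprob; case: ifP => [/forallP H|/negbT].
  rewrite [RHS](bigID (fun e : {set 'I_N} => #|e| == 2%N)) /=.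
  rewrite [X in _ * X]big1 ?mulr1; last first.
    move=> e He; rewrite /Wt (negbTE He); case: ifP => // eG.
    by move: (H e); rewrite eG (negbTE He).
  by apply: eq_bigr => e He; rewrite /Wt He.
rewrite negb_forall => /existsP [e]; rewrite negb_imply => /andP [eG He].
by rewrite (bigD1 e) //= /Wt (negbTE He) eG mul0r.
Qed.

Lemma SBMexp_prod (R : realType) (a b : R) lam n N (cl : 'I_N -> 'I_2)
  (H : {set 'I_N} -> bool -> R) :
  SBMexp a b lam n cl (fun G => \prod_e H e (e \in G)) =
  \prod_e (Wt a b lam n cl e true * H e true + Wt a b lam n cl e false * H e false).
Proof.
symmetry; rewrite bigA_distr; symmetry.
rewrite /SBMexp; apply: eq_bigr => G _.
rewrite SBMprob_prod -big_split /=; apply: eq_bigr => e _.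
by case: (e \in G).
Qed.

Lemma SBMexp_sum (R : realType) (a b : R) lam n N (cl : 'I_N -> 'I_2)
  (I : finType) (P : pred I) (F : I -> {set {set 'I_N}} -> R) :
  SBMexp a b lam n cl (fun G => \sum_(i | P i) F i G) =
  \sum_(i | P i) SBMexp a b lam n cl (F i).
Proof.
rewrite /SBMexp; under eq_bigr do rewrite mulr_sumr; exact: exchange_big.
Qed.

Lemma SBMexp_scale (R : realType) (a b : R) lam n N (cl : 'I_N -> 'I_2) c F :
  SBMexp a b lam n cl (fun G => c * F G) = c * SBMexp a b lam n cl F.
Proof.
rewrite /SBMexp mulr_sumr; apply: eq_bigr => G _; by rewrite mulrCA.
Qed.

Lemma SBMexp_add (R : realType) (a b : R) lam n N (cl : 'I_N -> 'I_2) F1 F2 :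
  SBMexp a b lam n cl (fun G => F1 G + F2 G) = SBMexp a b lam n cl F1 + SBMexp a b lam n cl F2.
Proof. by rewrite /SBMexp -big_split; apply: eq_bigr => G _; rewrite mulrDr. Qed.

Lemma SBMexp_1 (R : realType) (a b : R) lam n N (cl : 'I_N -> 'I_2) :
  SBMexp a b lam n cl (fun G => 1) = 1.
Proof.
have := SBMexp_prod a b lam n cl (fun _ _ => 1).
rewrite big1 // => ->; apply: big1 => e _; by rewrite !mulr1 Wt_sum.
Qed.

Lemma SBMexp_cst (R : realType) (a b : R) lam n N (cl : 'I_N -> 'I_2) c :
  SBMexp a b lam n cl (fun G => c) = c.
Proof.
have := SBMexp_scale a b lam n cl c (fun _ => 1).
by rewrite SBMexp_1 !mulr1.
Qed.

Lemma SBMprob_ge0 (R : realType) (a b : R) lam n N (cl : 'I_N -> 'I_2) G :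
  (forall e, 0 <= pedge a b lam n cl e <= 1) -> 0 <= SBMprob a b lam n cl G.
Proof.
move=> Hp; rewrite SBMprob_prod; apply: prodr_ge0 => e _.
move: (Hp e) => /andP[h1 h2].
rewrite /Wt; case: ifP => _; case: (e \in G) => //; by rewrite subr_ge0.
Qed.

Lemma SBMexp_le (R : realType) (a b : R) lam n N (cl : 'I_N -> 'I_2) F1 F2 :
  (forall e, 0 <= pedge a b lam n cl e <= 1) -> (forall G, F1 G <= F2 G) ->
  SBMexp a b lam n cl F1 <= SBMexp a b lam n cl F2.
Proof.
move=> Hp H; apply: ler_sum => G _; apply: ler_wpM2l; [exact: SBMprob_ge0| exact: H].
Qed.


Lemma pair_partition (R : realType) N (A B : {set 'I_N}) (F : 'I_N -> 'I_N -> R) :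
  \prod_(u in A) \prod_(v in B) F u v =
  \prod_(e : {set 'I_N}) \prod_(x : 'I_N * 'I_N | (x.1 \in A) && (x.2 \in B) && ([set x.1; x.2] == e)) F x.1 x.2.
Proof.
rewrite pair_big /=.
by rewrite (partition_big (fun x : 'I_N * 'I_N => [set x.1; x.2]) predT).
Qed.

Lemma pair_uniq N (A B : {set 'I_N}) (x y : 'I_N * 'I_N) :
  [disjoint A & B] -> x.1 \in A -> x.2 \in B -> y.1 \in A -> y.2 \in B ->
  [set x.1; x.2] = [set y.1; y.2] -> x = y.
Proof.
case: x => u v; case: y => u0 v0 /= dAB uA vB u0A v0B E.
have h1 : u \in [set u0; v0] by rewrite -E set21.
have h2 : v \in [set u0; v0] by rewrite -E set22.
case/set2P: h1 => [->|ev0]; last by move: (disjointFr dAB uA); rewrite ev0 v0B.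
case/set2P: h2 => [eu0|->] //; by move: (disjointFr dAB u0A); rewrite -eu0 vB.
Qed.

Lemma edge_prod (R : realType) (a b : R) lam n N (cl : 'I_N -> 'I_2)
  (A B : {set 'I_N}) (phi : 'I_N -> bool -> R) :
  [disjoint A & B] ->
  SBMexp a b lam n cl (fun G => \prod_(u in A) \prod_(v in B) phi u (adj G u v)) =
  \prod_(u in A) \prod_(v in B)
    (pedge a b lam n cl [set u; v] * phi u true + (1 - pedge a b lam n cl [set u; v]) * phi u false).
Proof.
move=> dAB.
pose P := fun x : 'I_N * 'I_N => (x.1 \in A) && (x.2 \in B).
pose H := fun (e : {set 'I_N}) bo => \prod_(x | P x && ([set x.1; x.2] == e)) phi x.1 bo.
have -> : (fun G => \prod_(u in A) \prod_(v in B) phi u (adj G u v)) =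
          (fun G => \prod_e H e (e \in G)).
  apply: funext => G; rewrite pair_partition; apply: eq_bigr => e _.
  by apply: eq_bigr => x /andP [_ /eqP <-].
rewrite SBMexp_prod pair_partition; apply: eq_bigr => e _.
rewrite /H; case: (pickP (fun x => P x && ([set x.1; x.2] == e))) => [x0 Hx0|Hn].
  have Hu : (fun x => P x && ([set x.1; x.2] == e)) =1 pred1 x0.
    move=> x /=; apply/idP/eqP => [/andP [/andP [x1 x2] /eqP ex]|->//].
    move: Hx0 => /andP [/andP [y1 y2] /eqP ey].
    by apply: (pair_uniq dAB) => //; rewrite ex ey.
  rewrite !(big_pred1 x0) //.
  move: Hx0 => /andP [/andP [y1 y2] /eqP ey].
  have ne : x0.1 != x0.2 by apply/eqP => h; move: (disjointFr dAB y1); rewrite h y2.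
  by rewrite /Wt -ey cards2 ne.
rewrite !big_pred0 // ?mulr1 ?Wt_sum // => x; by rewrite /= Hn.
Qed.

Lemma exp_prod_sum (R : realType) (a b : R) lam n N (cl : 'I_N -> 'I_2)
  (J : finType) (j0 : J) (A B : {set 'I_N}) (c : 'I_N -> J -> R) (phi : 'I_N -> J -> bool -> R) :
  [disjoint A & B] ->
  SBMexp a b lam n cl (fun G => \prod_(u in A) \sum_j (c u j * \prod_(v in B) phi u j (adj G u v))) =
  \prod_(u in A) \sum_j (c u j * \prod_(v in B)
    (pedge a b lam n cl [set u; v] * phi u j true + (1 - pedge a b lam n cl [set u; v]) * phi u j false)).
Proof.
move=> dAB.
have -> : (fun G => \prod_(u in A) \sum_j (c u j * \prod_(v in B) phi u j (adj G u v))) =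
  (fun G => \sum_(f in pffun_on j0 (mem A) predT) \prod_(u in A) (c u (f u) * \prod_(v in B) phi u (f u) (adj G u v))).
  by apply: funext => G; rewrite (big_distr_big j0).
rewrite SBMexp_sum (big_distr_big j0); apply: eq_bigr => f _.
under eq_fun do rewrite big_split /=.
rewrite SBMexp_scale big_split /=; congr (_ * _).
exact: (edge_prod a b lam n cl (fun u => phi u (f u)) dAB).
Qed.


Lemma card_sum (R : realType) (T : finType) (A : {set T}) (P : pred T) :
  (#|[set u in A | P u]|)%:R = \sum_(u in A) ((P u : nat)%:R : R).
Proof.
rewrite -sum1_card natr_sum [LHS]big_mkcond [RHS]big_mkcond /=; apply: eq_bigr => u _.
by rewrite inE; case: (u \in A); case: (P u).
Qed.

Lemma sum_ob (R : realType) (F : option bool -> R) :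
  \sum_(j : option bool) F j = F None + (F (Some true) + F (Some false)).
Proof.
rewrite (bigD1 None) //= (bigD1 (Some true)) //= (bigD1 (Some false)) //= big_pred0 ?addr0 //.
by case=> [[]|].
Qed.

Definition cc (R : realType) (c th mu r : R) (j : option bool) : R :=
  match j with None => 1 | Some true => c * expR (- th * (mu + r))
  | Some false => c * expR (th * (mu - r)) end.
Definition ph (R : realType) (th : R) (j : option bool) (bo : bool) : R :=
  match j with None => 1 | Some true => expR (th * (bo : nat)%:R)
  | Some false => expR (- th * (bo : nat)%:R) end.

Lemma expR_ge1 (R : realType) (x : R) : 0 <= x -> 1 <= expR x.
Proof. move=> h; apply: le_trans (expR_ge1Dx x); by rewrite lerDl. Qed.

Lemma pointwise (R : realType) N (cl : 'I_N -> 'I_2) G (sg : {ffun 'I_N -> bool})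
  (k l : 'I_2) (s t : bool) (p del th th' : R) :
  0 <= th -> 0 <= th' ->
  expR (th' * (#|[set u in Yset cl sg k s | Bevent p del cl G sg l t u]|)%:R) <=
  \prod_(u in Yset cl sg k s) \sum_j
     (cc (expR th' - 1) th (p * (#|Yset cl sg l t|)%:R)
         (Num.sqrt (p * (#|Yset cl sg l t|)%:R * del)) j
      * \prod_(v in Yset cl sg l t) ph th j (adj G u v)).
Proof.
move=> th0 th'0.
set mu := p * (#|Yset cl sg l t|)%:R.
set r := Num.sqrt (mu * del).
set c := expR th' - 1.
have c0 : 0 <= c by rewrite /c subr_ge0 expR_ge1.
rewrite card_sum mulr_sumr expR_sum; apply: ler_prod => u uA.
rewrite expR_ge0 /= sum_ob /= big1 // mulr1.
set D : R := (Yhat cl G sg l t u)%:R.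
have eD : D = \sum_(v in Yset cl sg l t) ((adj G u v : nat)%:R) by rewrite /D /Yhat card_sum.
have -> : \prod_(v in Yset cl sg l t) expR (th * (adj G u v : nat)%:R) = expR (th * D).
  by rewrite eD mulr_sumr expR_sum.
have -> : \prod_(v in Yset cl sg l t) expR (- th * (adj G u v : nat)%:R) = expR (- th * D).
  by rewrite eD mulr_sumr expR_sum.
rewrite -!mulrA -!expRD.
rewrite /Bevent -/mu -/r -/D.
case hb: (r <= `|D - mu|) => /=.
- rewrite mulr1 -[expR th'](subrK 1) -/c addrC lerD2l -mulrDr.
  rewrite -[X in X <= _]mulr1 ler_wpM2l //.
  have [h|h] := lerP 0 (D - mu).
  + rewrite ger0_norm // in hb.
    have h1 : 1 <= expR (- th * (mu + r) + th * D).
      apply: expR_ge1; rewrite mulNr addrC subr_ge0; apply: ler_wpM2l => //.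
      by rewrite -lerBrDl.
    apply: le_trans h1 _; by rewrite lerDl expR_ge0.
  + rewrite ltr0_norm // in hb.
    have h1 : 1 <= expR (th * (mu - r) + - th * D).
      apply: expR_ge1; rewrite mulNr subr_ge0; apply: ler_wpM2l => //.
      by rewrite lerBrDl addrC -lerBrDl -opprB.
    apply: le_trans h1 _; by rewrite lerDr expR_ge0.
- rewrite mulr0 expR0 lerDl; apply: addr_ge0; apply: mulr_ge0 => //; exact: expR_ge0.
Qed.


Lemma exp_up (R : realType) (th : R) : 0 <= th -> th <= 1/2 -> expR th <= 1 + th + 2 * th ^+ 2.
Proof.
move=> h0 h1.
have h := expR_ge1Dx (- th).
have e1 := expRxMexpNx_1 th.
have ep := expR_gt0 th.
have : expR th * (1 - th) <= 1.
  by have := ler_wpM2l (ltW ep) h; rewrite e1.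
move=> H; nra.
Qed.

Lemma exp_dn (R : realType) (th : R) : 0 <= th -> expR (- th) <= 1 - th + 2 * th ^+ 2.
Proof.
move=> h0.
have h := expR_ge1Dx th.
have e1 := expRxMexpNx_1 th.
have ep := expR_gt0 (- th).
have : expR (- th) * (1 + th) <= 1.
  by have := ler_wpM2l (ltW ep) h; rewrite [expR (- th) * expR th]mulrC e1.
move=> H; nra.
Qed.

Lemma base_pow (R : realType) (p x : R) (m : nat) : 0 <= p <= 1 -> 0 <= x ->
  (p * x + (1 - p)) ^+ m <= expR (p * m%:R * (x - 1)).
Proof.
move=> /andP [p0 p1] x0.
have -> : p * m%:R * (x - 1) = m%:R * (p * (x - 1)) by ring.
rewrite expRM_natl; apply: lerXn2r.
- rewrite qualifE /=; nra.
- by rewrite qualifE /= expR_ge0.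
- apply: le_trans (expR_ge1Dx _); lra.
Qed.

Lemma tail (R : realType) (del Y : R) : Y <= - (del / 8) ->
  (expR (del / 8) - 1) * expR Y <= 1.
Proof.
move=> h.
apply: le_trans (_ : expR (del / 8) * expR Y <= _).
  apply: ler_wpM2r; [exact: expR_ge0|]; by rewrite lerBlDr lerDl.
rewrite -expRD expR_le1; lra.
Qed.

Lemma key_pm (R : realType) (mu del p r th : R) (m : nat) (sgn : bool) :
  0 < mu -> 0 < del -> del <= 4 * mu -> 0 <= p <= 1 -> mu = p * m%:R ->
  r = Num.sqrt (mu * del) -> th = r / (4 * mu) ->
  (expR (del / 8) - 1) *
   (if sgn then expR (- th * (mu + r)) * (p * expR (th * 1) + (1 - p) * expR (th * 0)) ^+ m
    else expR (th * (mu - r)) * (p * expR (- th * 1) + (1 - p) * expR (- th * 0)) ^+ m) <= 1.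
Proof.
move=> mu0 del0 dle p01 emu er eth.
have r0 : 0 <= r by rewrite er; exact: sqrtr_ge0.
have r2 : r ^+ 2 = mu * del by rewrite er sqr_sqrtr // mulr_ge0 // ltW.
have th0 : 0 <= th by rewrite eth divr_ge0 // mulr_ge0 // ltW.
have thr : th * r = del / 4.
  rewrite eth mulrAC -expr2 r2; field; by rewrite Order.POrderTheory.gt_eqF.
have th2 : 2 * mu * th ^+ 2 = del / 8.
  rewrite eth expr_div_n r2; field; by rewrite Order.POrderTheory.gt_eqF.
have thle : th <= 1/2.
  have : th ^+ 2 <= (1/2) ^+ 2.
    have : 2 * mu * th ^+ 2 <= 2 * mu * (1/2) ^+ 2 by rewrite th2; lra.
    by rewrite ler_pM2l // mulr_gt0.
  by rewrite ler_pXn2r // qualifE /= //; lra.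
rewrite !mulr0 !mulr1 expR0 mulr1.
case: sgn.
- apply: le_trans (_ : (expR (del / 8) - 1) * (expR (- th * (mu + r)) * expR (p * m%:R * (expR th - 1))) <= _).
    apply: ler_wpM2l; first by rewrite subr_ge0 expR_ge1 // divr_ge0 // ltW.
    apply: ler_wpM2l; first exact: expR_ge0.
    by apply: base_pow => //; exact: expR_ge0.
  rewrite -expRD; apply: tail; rewrite -emu.
  have := exp_up th0 thle.
  move=> h; have : mu * (expR th - 1) <= mu * (th + 2 * th ^+ 2) by rewrite ler_pM2l //; lra.
  nra.
- apply: le_trans (_ : (expR (del / 8) - 1) * (expR (th * (mu - r)) * expR (p * m%:R * (expR (- th) - 1))) <= _).
    apply: ler_wpM2l; first by rewrite subr_ge0 expR_ge1 // divr_ge0 // ltW.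
    apply: ler_wpM2l; first exact: expR_ge0.
    by apply: base_pow => //; exact: expR_ge0.
  rewrite -expRD; apply: tail; rewrite -emu.
  have := exp_dn th0.
  move=> h; have : mu * (expR (- th) - 1) <= mu * (- th + 2 * th ^+ 2) by rewrite ler_pM2l //; lra.
  nra.
Qed.


Lemma sigma_bound (R : realType) (a b : R) lam n N (cl : 'I_N -> 'I_2) sg k l s t (p del : R) :
  (forall e, 0 <= pedge a b lam n cl e <= 1) ->
  (forall u v, u \in Yset cl sg k s -> v \in Yset cl sg l t -> pedge a b lam n cl [set u; v] = p) ->
  [disjoint Yset cl sg k s & Yset cl sg l t] ->
  0 <= p <= 1 ->
  0 < p * (#|Yset cl sg l t|)%:R -> 0 < del -> del <= 4 * (p * (#|Yset cl sg l t|)%:R) ->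
  SBMexp a b lam n cl (fun G =>
     expR (del / 8 * (#|[set u in Yset cl sg k s | Bevent p del cl G sg l t u]|)%:R))
  <= 3 ^+ N.
Proof.
move=> Hp Hpe dAB p01 mu0 del0 dle.
set mu := p * (#|Yset cl sg l t|)%:R.
set r := Num.sqrt (mu * del).
set th := r / (4 * mu).
have th0 : 0 <= th by rewrite divr_ge0 ?sqrtr_ge0 // mulr_ge0 // ltW.
have th'0 : 0 <= del / 8 by rewrite divr_ge0 // ltW.
apply: le_trans (SBMexp_le Hp (fun G => pointwise cl G sg k l s t p del th0 th'0)) _.
rewrite (exp_prod_sum a b lam n cl None (fun _ j => cc (expR (del/8) - 1) th mu r j) (fun _ j => ph th j) dAB).
apply: le_trans (_ : \prod_(u in Yset cl sg k s) (3 : R) <= _); last first.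
  rewrite prodr_const; have := max_card (mem (Yset cl sg k s)); rewrite card_ord => h.
  rewrite -[X in _ <= 3 ^+ X](subnKC h) exprD ler_peMr ?exprn_ege1 ?exprn_ge0 //; lra.
apply: ler_prod => u uA.
rewrite sum_ob /=.
rewrite big1 ?mul1r; last by move=> v _; lra.
have e1 : forall (f : R -> R), \prod_(v in Yset cl sg l t)
    (pedge a b lam n cl [set u; v] * f 1 + (1 - pedge a b lam n cl [set u; v]) * f 0)
    = (p * f 1 + (1 - p) * f 0) ^+ #|Yset cl sg l t|.
  move=> f; rewrite -prodr_const; apply: eq_bigr => v vB; by rewrite Hpe.
rewrite (e1 (fun x => expR (th * x))) (e1 (fun x => expR (- th * x))).
have k1 := key_pm (r := r) (th := th) (m := #|Yset cl sg l t|) true mu0 del0 dle p01 erefl erefl erefl.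
have k2 := key_pm (r := r) (th := th) (m := #|Yset cl sg l t|) false mu0 del0 dle p01 erefl erefl erefl.
have c0 : 0 <= expR (del / 8) - 1 by rewrite subr_ge0 expR_ge1.
have q1 : 0 <= expR (- th * (mu + r)) * (p * expR (th * 1) + (1 - p) * expR (th * 0)) ^+ #|Yset cl sg l t|.
  apply: mulr_ge0; first exact: expR_ge0.
  apply: exprn_ge0; apply: addr_ge0; apply: mulr_ge0; rewrite ?expR_ge0 //; lra.
have q2 : 0 <= expR (th * (mu - r)) * (p * expR (- th * 1) + (1 - p) * expR (- th * 0)) ^+ #|Yset cl sg l t|.
  apply: mulr_ge0; first exact: expR_ge0.
  apply: exprn_ge0; apply: addr_ge0; apply: mulr_ge0; rewrite ?expR_ge0 //; lra.
have := mulr_ge0 c0 q1; have := mulr_ge0 c0 q2.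
lra.
Qed.


Lemma bigmax_ge0 (R : realType) (I : finType) (P : pred I) (F : I -> R) :
  0 <= \big[Num.max/0]_(i | P i) F i.
Proof. apply: (big_rec (fun x => 0 <= x)) => // i x _ hx; by rewrite le_max hx orbT. Qed.

Lemma bigmax_witness (R : realType) (I : finType) (P : pred I) (F : I -> R) (eta : R) :
  0 < eta -> eta <= \big[Num.max/0]_(i | P i) F i -> exists2 i, P i & eta <= F i.
Proof.
move=> e0; apply: (big_ind (fun x => eta <= x -> exists2 i, P i & eta <= F i)).
- move=> h; lra.
- move=> x y hx hy; rewrite le_max => /orP [/hx|/hy] //.
- move=> i Pi h; by exists i.
Qed.

Lemma pw2 (R : realType) (a b alpha zeta : R) (v : 'I_2 -> R) (lam gam del xi : nat -> R)
  n N (cl : 'I_N -> 'I_2) k l s t (f : R -> R) (M eps eta : R) G :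
  (forall x, `|f x| <= M) -> (forall x, 0 <= x < eta -> `|f x - f 0| <= eps) ->
  0 < eta -> 0 <= eps -> 0 < gam n -> 0 < del n -> (0 < n)%N ->
  `|f (Xstat a b alpha v zeta lam gam del xi n cl k l s t G) - f 0| <=
  eps + 2 * M * expR (- (del n / 8) * (eta * n%:R / gam n)) *
    \sum_(sg | inSigma a b alpha v zeta (xi n) cl sg)
       expR (del n / 8 * (#|[set u in Yset cl sg k s |
           Bevent (pn a b lam n k l) (del n) cl G sg l t u]|)%:R).
Proof.
move=> fM fc e0 eps0 g0 d0 n0.
have M0 : 0 <= M by apply: le_trans (fM 0).
have S0 : forall (Q : pred {ffun 'I_N -> bool}) (F : {ffun 'I_N -> bool} -> R),
   0 <= \sum_(sg | Q sg) expR (F sg) by move=> Q F; apply: sumr_ge0 => i _; exact: expR_ge0.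
set X := Xstat _ _ _ _ _ _ _ _ _ _ _ _ _ _ _ _.
have X0 : 0 <= X by exact: bigmax_ge0.
have [Xl|Xg] := ltP X eta.
  apply: le_trans (fc X _) _; first by rewrite X0.
  rewrite lerDl; apply: mulr_ge0; last exact: S0.
  apply: mulr_ge0; [lra| exact: expR_ge0].
have [sg Hsg Hge] := bigmax_witness e0 Xg.
set cnt : R := (#|_|)%:R in Hge.
have n0' : 0 < (n%:R : R) by rewrite ltr0n.
have hc : eta * n%:R / gam n <= cnt.
  apply: le_trans (_ : (gam n / n%:R * cnt) * n%:R / gam n <= _).
    apply: ler_wpM2r; first by rewrite invr_ge0 ltW.
    by apply: ler_wpM2r; first exact: ler0n.
  have -> : gam n / n%:R * cnt * n%:R / gam n = cnt.
    field; apply/andP; split; by rewrite Order.POrderTheory.gt_eqF.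
  done.
apply: le_trans (_ : 2 * M <= _).
  apply: le_trans (ler_normB _ _) _; have := fM 0; have := fM X; lra.
apply: le_trans (_ : 2 * M * 1 <= _); first by rewrite mulr1.
have h1 : 1 <= expR (- (del n / 8) * (eta * n%:R / gam n)) * expR (del n / 8 * cnt).
  rewrite -expRD; apply: expR_ge1; rewrite mulNr addrC subr_ge0 ler_wpM2l //.
  by rewrite divr_ge0 // ltW.
apply: le_trans (_ : 2 * M * (expR (- (del n / 8) * (eta * n%:R / gam n)) * expR (del n / 8 * cnt)) <= _).
  by rewrite ler_wpM2l // mulr_ge0.
rewrite ler_wpDl // !mulrA; apply: ler_wpM2l; first by rewrite mulr_ge0 ?expR_ge0 // mulr_ge0.
rewrite (bigD1 sg) //= lerDl; apply: sumr_ge0 => i _; exact: expR_ge0.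
Qed.


Lemma core (R : realType) (a b alpha zeta : R) (v : 'I_2 -> R) (lam gam del xi : nat -> R)
  n N (cl : 'I_N -> 'I_2) k l s t (f : R -> R) (M eps eta : R) :
  (forall x, `|f x| <= M) -> (forall x, 0 <= x < eta -> `|f x - f 0| <= eps) ->
  0 < eta -> 0 <= eps -> 0 < gam n -> 0 < del n -> (0 < n)%N ->
  (forall e, 0 <= pedge a b lam n cl e <= 1) ->
  (forall sg, inSigma a b alpha v zeta (xi n) cl sg ->
     SBMexp a b lam n cl (fun G => expR (del n / 8 * (#|[set u in Yset cl sg k s |
           Bevent (pn a b lam n k l) (del n) cl G sg l t u]|)%:R)) <= 3 ^+ N) ->
  `|f 0 - SBMexp a b lam n cl (fun G => f (Xstat a b alpha v zeta lam gam del xi n cl k l s t G))|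
  <= eps + 2 * M * expR (- (del n / 8) * (eta * n%:R / gam n)) * (3 ^+ N * (2 ^ N)%:R).
Proof.
move=> fM fc e0 eps0 g0 d0 n0 Hp Hs.
have M0 : 0 <= M by apply: le_trans (fM 0).
have -> : f 0 - SBMexp a b lam n cl (fun G => f (Xstat a b alpha v zeta lam gam del xi n cl k l s t G)) =
   - SBMexp a b lam n cl (fun G => f (Xstat a b alpha v zeta lam gam del xi n cl k l s t G) + - f 0).
  by rewrite SBMexp_add SBMexp_cst opprD opprK addrC.
rewrite normrN.
apply: le_trans (_ : SBMexp a b lam n cl (fun G => `|f (Xstat a b alpha v zeta lam gam del xi n cl k l s t G) + - f 0|) <= _).
  rewrite /SBMexp; apply: le_trans (ler_norm_sum _ _ _) _.
  apply: ler_sum => G _; rewrite normrM ger0_norm //; exact: SBMprob_ge0.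
apply: le_trans (SBMexp_le Hp (fun G => pw2 a b alpha zeta v lam xi cl k l s t G fM fc e0 eps0 g0 d0 n0)) _.
rewrite SBMexp_add SBMexp_cst SBMexp_scale SBMexp_sum lerD2l.
apply: ler_wpM2l; first by rewrite mulr_ge0 ?expR_ge0 // mulr_ge0.
apply: le_trans (_ : \sum_(sg : {ffun 'I_N -> bool}) (3 ^+ N : R) <= _).
  rewrite [X in _ <= X](bigID (fun sg => inSigma a b alpha v zeta (xi n) cl sg)) /=.
  apply: le_trans (_ : \sum_(sg | inSigma a b alpha v zeta (xi n) cl sg) (3 ^+ N : R) <= _).
    by apply: ler_sum => sg Hsg; exact: Hs.
  by rewrite lerDl; apply: sumr_ge0 => i _; rewrite exprn_ge0.
by rewrite sumr_const card_ffun card_bool card_ord mulr_natr.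
Qed.


Lemma Yset_disj N (cl : 'I_N -> 'I_2) sg k l s t :
  (k, s) <> (l, t) -> [disjoint Yset cl sg k s & Yset cl sg l t].
Proof.
move=> ne; rewrite -setI_eq0; apply/eqP/setP => u; rewrite !inE.
apply/negP => /andP [/andP [/eqP h1 /eqP h2] /andP [/eqP h3 /eqP h4]].
by apply: ne; rewrite -h1 -h2 h3 h4.
Qed.

Lemma pedge_pair (R : realType) (a b : R) lam n N (cl : 'I_N -> 'I_2) sg k l s t u v :
  u \in Yset cl sg k s -> v \in Yset cl sg l t ->
  pedge a b lam n cl [set u; v] = pn a b lam n k l.
Proof.
rewrite !inE => /andP [/eqP h1 _] /andP [/eqP h3 _].
rewrite /pedge /pn; congr (_ * _ / _); congr (if _ then _ else _).
apply/idP/idP.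
  move=> /forallP H; move: (H u); rewrite set21 /= => /forallP H2; move: (H2 v).
  by rewrite set22 /= h1 h3.
move=> /eqP e; apply/forallP => x; apply/implyP => /set2P hx; apply/forallP => w.
apply/implyP => /set2P hw.
by case: hx => ->; case: hw => ->; rewrite ?h1 ?h3 ?e.
Qed.

Lemma V_sum N (cl : 'I_N -> 'I_2) : (Vk cl ord0 + Vk cl ord_max)%N = N.
Proof.
rewrite /Vk.
have -> : [set u | cl u == ord_max] = ~: [set u | cl u == ord0].
  apply/setP => u; rewrite !inE; by case: (cl u) => [[|[|]]].
by rewrite cardsC card_ord.
Qed.

Lemma card_Yset (R : realType) N (cl : 'I_N -> 'I_2) sg l t :
  (#|Yset cl sg l t|)%:R = \sum_(u | cl u == l) (((sg u == t) : nat)%:R : R).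
Proof.
rewrite -sum1_card natr_sum [LHS]big_mkcond [RHS]big_mkcond /=; apply: eq_bigr => u _.
by rewrite inE; case: (cl u == l); case: (sg u == t).
Qed.

Lemma card_V (R : realType) N (cl : 'I_N -> 'I_2) l :
  ((Vk cl l)%:R : R) = \sum_(u | cl u == l) 1.
Proof.
rewrite /Vk -sum1_card natr_sum [LHS]big_mkcond [RHS]big_mkcond /=; apply: eq_bigr => u _.
by rewrite inE; case: (cl u == l).
Qed.

Lemma Yset_lb (R : realType) (a b alpha zeta : R) (v : 'I_2 -> R) (xi : R) N (cl : 'I_N -> 'I_2) sg l t :
  inSigma a b alpha v zeta xi cl sg -> (0 < Vk cl l)%N ->
  xi * (Vk cl l)%:R / 2 <= (#|Yset cl sg l t|)%:R.
Proof.
move=> /andP [/forallP /(_ l) /andP [h1 h2] _] V0.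
move: h1 h2; rewrite /magn.
have eS : \sum_(u | cl u == l) spin R (sg u) = 2 * (#|Yset cl sg l true|)%:R - (Vk cl l)%:R.
  rewrite card_Yset card_V mulr_sumr -sumrB; apply: eq_bigr => u _.
  by rewrite /spin; case: (sg u) => /=; lra.
have eC : (#|Yset cl sg l false|)%:R = (Vk cl l)%:R - (#|Yset cl sg l true|)%:R :> R.
  rewrite !card_Yset card_V -sumrB; apply: eq_bigr => u _.
  by case: (sg u) => /=; lra.
rewrite eS => h1 h2.
set V : R := (Vk cl l)%:R in eS eC h1 h2 *.
have V0' : 0 < V by rewrite ltr0n.
have h1' : (-1 + xi) * V <= 2 * (#|Yset cl sg l true|)%:R - V.
  have := ler_wpM2r (ltW V0') h1.
  by rewrite mulrAC mulVf ?mul1r // Order.POrderTheory.gt_eqF.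
have h2' : 2 * (#|Yset cl sg l true|)%:R - V <= (1 - xi) * V.
  have := ler_wpM2r (ltW V0') h2.
  by rewrite mulrAC mulVf ?mul1r // Order.POrderTheory.gt_eqF.
case: t; last rewrite eC; nra.
Qed.


Unset Implicit Arguments. Set Strict Implicit. Set Printing Implicit Defensive.
Local Open Scope classical_set_scope.
Local Open Scope ring_scope.

Theorem lemmaB3 (R : realType)
  (N : nat -> nat) (cl : forall n, 'I_(N n) -> 'I_2) (v : 'I_2 -> R)
  (a b alpha zeta : R) (lam gam del xi : nat -> R)
  (k l : 'I_2) (s t : bool) :
  (forall j, 0 < v j) ->
  (forall j, (fun n => (Vk (cl n) j)%:R / n%:R) @ \oo --> v j) ->
  0 < b -> b < a ->
  lam @ \oo --> +oo ->
  (forall n, a * lam n / n%:R <= 1) ->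
  (forall n, 0 < gam n) -> (forall n, 0 < del n) -> (forall n, 0 < xi n < 1) ->
  del @ \oo --> +oo ->
  (fun n => del n / (xi n * lam n)) @ \oo --> 0 ->
  (fun n => del n / gam n) @ \oo --> +oo ->
  0 < zeta ->
  (k, s) <> (l, t) ->
  forall f : R -> R, continuous f -> (exists M : R, forall x, `|f x| <= M) ->
  (fun n => SBMexp a b lam n (cl n)
              (fun G => f (Xstat a b alpha v zeta lam gam del xi n (cl n) k l s t G)))
    @ \oo --> f 0.
Proof.
move=> vpos Vcv b0 ba lamcv hp1 gam0 del0 xi01 delcv dxcv dgcv zeta0 ne f fc [M fM].
have M0 : 0 <= M by apply: le_trans (fM 0).
apply/cvgrPdist_le => e e0.
set eps := e / 2.
have eps0 : 0 < eps by rewrite divr_gt0.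
have [eta eta0 Hb] : exists2 eta : R, 0 < eta & forall x, 0 <= x < eta -> `|f x - f 0| <= eps.
  have := fc 0; move/cvgrPdist_lt => /(_ eps eps0).
  move=> h; have [eta eta0 Hb] := (nbhs_ballP _ _).1 h; exists eta => // x /andP [x0 xe].
  have : ball 0 eta x by rewrite -ball_normE /ball_ /= sub0r normrN ger0_norm.
  by move/Hb => /= hh; rewrite distrC ltW.
set C : R := 3 / 2 * (v ord0 + v ord_max).
set K : R := 8 * (3 * C + 1) / eta.
have C0 : 0 < C by rewrite /C mulr_gt0 // addr_gt0.
have H1 : \forall n \near \oo, 0 < lam n by move/cvgryPgt: lamcv; apply.
have H2 : forall j, \forall n \near \oo, `|v j - (Vk (cl n) j)%:R / n%:R| < v j / 2.
  move=> j; move/cvgrPdist_lt: (Vcv j); apply; by rewrite divr_gt0.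
have H3 : \forall n \near \oo, `|0 - del n / (xi n * lam n)| < b * v l.
  by move/cvgrPdist_lt: dxcv; apply; rewrite mulr_gt0.
have H4 : \forall n \near \oo, K < del n / gam n by move/cvgryPgt: dgcv; apply.
have H5 : \forall n \near \oo, 2 * M / eps < n%:R by exact: nbhs_infty_gtr.
near=> n.
have F1 : 0 < lam n by near: n; exact: H1.
have F2l : `|v l - (Vk (cl n) l)%:R / n%:R| < v l / 2 by near: n; exact: H2.
have F20 : `|v ord0 - (Vk (cl n) ord0)%:R / n%:R| < v ord0 / 2 by near: n; exact: H2.
have F21 : `|v ord_max - (Vk (cl n) ord_max)%:R / n%:R| < v ord_max / 2 by near: n; exact: H2.
have F3 : `|0 - del n / (xi n * lam n)| < b * v l by near: n; exact: H3.
have F4 : K < del n / gam n by near: n; exact: H4.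
have F5 : 2 * M / eps < n%:R by near: n; exact: H5.
have n0 : (0 < n)%N.
  rewrite lt0n; apply/negP => /eqP en; move: F2l; rewrite en invr0 mulr0 subr0 => h.
  have := vpos l; rewrite ger0_norm ?ltW // in h; lra.
set nn : R := n%:R.
have nn0 : 0 < nn by rewrite ltr0n.
have lowV : forall j, `|v j - (Vk (cl n) j)%:R / nn| < v j / 2 ->
   v j / 2 * nn < (Vk (cl n) j)%:R /\ (Vk (cl n) j)%:R < 3 / 2 * v j * nn.
  move=> j; rewrite ltr_norml => /andP [h1 h2].
  have e1 : (Vk (cl n) j)%:R = (Vk (cl n) j)%:R / nn * nn.
    by rewrite mulfVK // Order.POrderTheory.gt_eqF.
  rewrite e1; split; nra.
have [Vl1 Vl2] := lowV _ F2l.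
have [V01 V02] := lowV _ F20.
have [V11 V12] := lowV _ F21.
have NC : (N n)%:R < C * nn.
  have eN : (N n)%:R = (Vk (cl n) ord0)%:R + (Vk (cl n) ord_max)%:R :> R by rewrite -natrD V_sum.
  rewrite eN /C; have := vpos ord0; have := vpos ord_max; nra.
have Vlpos : (0 < Vk (cl n) l)%N.
  rewrite -(ltr0n R); apply: le_lt_trans Vl1; have := vpos l; nra.
set q := lam n / nn.
have q0 : 0 < q by rewrite divr_gt0.
have aq : a * q <= 1 by rewrite /q mulrA; exact: hp1.
have cq : forall c : R, b <= c <= a -> 0 <= c * lam n / nn <= 1.
  move=> c /andP [c1 c2]; rewrite -mulrA -/q; apply/andP; split; nra.
have Hp : forall e, 0 <= pedge a b lam n (cl n) e <= 1.
  move=> e0'; rewrite /pedge; apply: cq; case: ifP => _; lra.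
set p := pn a b lam n k l.
have p01 : 0 <= p <= 1 by rewrite /p /pn; apply: cq; case: ifP => _; lra.
have pb : b * q <= p by rewrite /p /pn -mulrA -/q; case: ifP => _; nra.
have xin := xi01 n.
have dle : del n <= b * v l * xi n * lam n.
  move: F3; rewrite sub0r normrN ger0_norm; last by rewrite divr_ge0 ?mulr_ge0 // ltW // (andP xin).1.
  rewrite ltr_pdivrMr; last by rewrite mulr_gt0 // (andP xin).1.
  by rewrite !mulrA => /ltW.
have Hs : forall sg, inSigma a b alpha v zeta (xi n) (cl n) sg ->
     SBMexp a b lam n (cl n) (fun G => expR (del n / 8 * (#|[set u in Yset (cl n) sg k s |
           Bevent (pn a b lam n k l) (del n) (cl n) G sg l t u]|)%:R)) <= 3 ^+ N n.
  move=> sg Hsg.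
  have Bl := Yset_lb t Hsg Vlpos.
  set B := (#|Yset (cl n) sg l t|)%:R in Bl *.
  have mu0 : 0 < p * B.
    apply: mulr_gt0; first by apply: lt_le_trans pb; rewrite mulr_gt0.
    apply: lt_le_trans Bl; rewrite !mulr_gt0 //; first by case/andP: xin.
    by rewrite ltr0n.
  apply: sigma_bound => //.
  - by move=> u w uA wB; exact: pedge_pair uA wB.
  - exact: Yset_disj.
  - apply: le_trans dle _.
    have xi0 : 0 < xi n by case/andP: xin.
    have h1 : b * q * (xi n * (Vk (cl n) l)%:R / 2) <= p * B.
      apply: le_trans (_ : b * q * B <= _); first by rewrite ler_wpM2l // mulr_ge0 // ltW.
      by rewrite ler_wpM2r // ler0n.
    have h2 : q * nn = lam n by rewrite /q mulfVK // Order.POrderTheory.gt_eqF.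
    have h3 : b * q * xi n * (v l / 2 * nn) <= b * q * xi n * (Vk (cl n) l)%:R.
      apply: ler_wpM2l; last exact: ltW.
      apply: mulr_ge0; last exact: ltW.
      by apply: mulr_ge0; apply: ltW.
    rewrite -h2.
    have -> : b * v l * xi n * (q * nn) = 2 * (b * q * xi n * (v l / 2 * nn)) by field.
    have e2 : b * q * (xi n * (Vk (cl n) l)%:R / 2) = (b * q * xi n * (Vk (cl n) l)%:R) / 2 by field.
    rewrite e2 in h1.
    rewrite -/p -/B; lra.
apply: le_trans (core fM Hb eta0 (ltW eps0) (gam0 n) (del0 n) n0 Hp Hs) _.
have P3 : 3 ^+ N n * (2 ^ N n)%:R <= expR (3 * (N n)%:R) :> R.
  have -> : 3 * (N n)%:R = (N n)%:R * 2 + (N n)%:R * 1 :> R by ring.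
  rewrite expRD !expRM_natl natrX; apply: ler_pM.
  - exact: exprn_ge0.
  - exact: exprn_ge0.
  - apply: lerXn2r; rewrite ?qualifE //= ?expR_ge0 //.
    apply: le_trans (expR_ge1Dx 2); lra.
  - apply: lerXn2r; rewrite ?qualifE //= ?expR_ge0 //.
    apply: le_trans (expR_ge1Dx 1); lra.
have g0 := gam0 n.
have d0 := del0 n.
have Ex : - (del n / 8) * (eta * nn / gam n) + 3 * (N n)%:R <= - nn.
  rewrite mulNr.
  have -> : del n / 8 * (eta * nn / gam n) = (del n / gam n) * (eta * nn / 8).
    by field; rewrite Order.POrderTheory.gt_eqF.
  have h : K * (eta * nn / 8) <= del n / gam n * (eta * nn / 8).
    apply: ler_wpM2r; last exact: ltW.
    by rewrite divr_ge0 // mulr_ge0 // ltW.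
  have e3 : K * (eta * nn / 8) = (3 * C + 1) * nn.
    by rewrite /K; field; rewrite Order.POrderTheory.gt_eqF.
  rewrite e3 in h; nra.
have En : 2 * M * expR (- nn) <= eps.
  have ee : 1 + nn <= expR nn := expR_ge1Dx nn.
  have ep := expR_gt0 nn.
  rewrite expRN; have F5' : 2 * M < nn * eps.
    by move: F5; rewrite ltr_pdivrMr.
  rewrite ler_pdivrMr //; nra.
apply: le_trans (_ : eps + 2 * M * expR (- nn) <= _); last first.
  have : eps + eps = e by rewrite /eps; field.
  lra.
rewrite lerD2l -mulrA ler_wpM2l ?mulr_ge0 //.
apply: le_trans (_ : expR (- (del n / 8) * (eta * nn / gam n)) * expR (3 * (N n)%:R) <= _).
  by rewrite ler_wpM2l ?expR_ge0.
by rewrite -expRD ler_expR.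
Unshelve. all: end_near.
Qed.
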